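(* If $M$ is a simple rank-$r$ matroid with no $2$-claw, then $|E(M)| \ge 2^r-1$. If equality holds then $M \cong \mathrm{PG}(r-1,2)$.
   Context: A claw of a matroid $M$ is a set that is both a flat and an independent set of $M$; a $k$-claw is a claw of size $k$. $\mathrm{PG}(r-1,2)$ is the rank-$r$ binary projective geometry. *)

(* Defs.v *)
(* Matroids on a finite ground set (the finType T itself). *)
From HB Require Import structures.
From mathcomp Require Import all_boot all_order all_algebra.
Set Implicit Arguments. Unset Strict Implicit. Unset Printing Implicit Defensive.
Import GRing.Theory.

Record matroid (T : finType) := Matroid {
  indep : {set T} -> bool;
  indep0 : indep set0;
  indep_sub : forall A B : {set T}, B \subset A -> indep A -> indep B;
  indep_aug : forall A B : {set T}, indep A -> indep B -> #|A| < #|B| ->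
      exists2 x, x \in B :\: A & indep (x |: A)
}.

Definition mrank (T : finType) (M : matroid T) (A : {set T}) : nat :=
  \max_(B : {set T} | (B \subset A) && indep M B) #|B|.

Definition mrankM (T : finType) (M : matroid T) : nat := mrank M setT.

(* simple: no loops and no parallel pairs (all sets of size <= 2 independent) *)
Definition simple (T : finType) (M : matroid T) : Prop :=
  forall A : {set T}, #|A| <= 2 -> indep M A.

Definition flat (T : finType) (M : matroid T) (F : {set T}) : Prop :=
  forall x, x \notin F -> mrank M F < mrank M (x |: F).

Definition claw (T : finType) (M : matroid T) (C : {set T}) : Prop :=
  flat M C /\ indep M C.

Definition kclaw (T : finType) (M : matroid T) (k : nat) (C : {set T}) : Prop :=
  claw M C /\ #|C| = k.

(* M is isomorphic to PG(r-1,2), the vector matroid over GF(2) on the set of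
   nonzero vectors of GF(2)^r: there is a bijection f from E(M) onto the nonzero
   row vectors of 'F_2^r sending independent sets exactly to linearly
   independent sets. *)
Definition iso_PG (T : finType) (M : matroid T) (r : nat) : Prop :=
  exists f : T -> 'rV['F_2]_r,
    [/\ injective f,
        (forall x, f x != 0%R),
        (forall v : 'rV['F_2]_r, v != 0%R -> exists x, f x = v) &
        (forall A : {set T}, indep M A = free [seq f x | x <- enum A])].

(* Main.v *)
Require Import Defs.
From mathcomp Require Import all_boot all_order all_algebra zify.
Set Implicit Arguments. Unset Strict Implicit. Unset Printing Implicit Defensive.
Import GRing.Theory.

Lemma card_disjU (T : finType) (A B : {set T}) :
  (forall x, x \in A -> x \notin B) -> #|A :|: B| = #|A| + #|B|.
Proof.
move=> H; rewrite -cardsUI.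
have -> : A :&: B = set0.
  by apply/setP=> x; rewrite !inE; case: (boolP (x \in A)) => // /H /negbTE ->.
by rewrite cards0 addn0.
Qed.

Lemma setU1_in (T : finType) (a : T) (A : {set T}) : a \in A -> a |: A = A.
Proof. by move=> aA; apply/setP=> x; rewrite in_setU1; case: eqP => // ->. Qed.

Section Basic.
Variables (T : finType) (M : matroid T).
Local Notation rk := (mrank M).

Lemma rk_le_card (A : {set T}) : rk A <= #|A|.
Proof. by apply/bigmax_leqP => B /andP[sBA _]; exact: subset_leq_card. Qed.

Lemma indep_le_rk (A B : {set T}) : B \subset A -> indep M B -> #|B| <= rk A.
Proof.
move=> sBA iB; rewrite /mrank.
have := @leq_bigmax_cond _ (fun C : {set T} => (C \subset A) && indep M C) (fun C => #|C|) B.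
by rewrite sBA iB => /(_ isT).
Qed.

Lemma rk_wit (A : {set T}) : exists2 B : {set T}, (B \subset A) && indep M B & #|B| = rk A.
Proof.
have H0 : (set0 \subset A) && indep M set0 by rewrite sub0set indep0.
have [B PB maxB] := @arg_maxnP _ set0 (fun B : {set T} => (B \subset A) && indep M B)
   (fun B : {set T} => #|B|) H0.
exists B => //; apply/eqP; rewrite eqn_leq.
case/andP: (PB) => sBA iB; rewrite indep_le_rk //=.
by apply/bigmax_leqP => C PC; exact: maxB.
Qed.

Lemma rk_mono (A A' : {set T}) : A \subset A' -> rk A <= rk A'.
Proof.
move=> sAA'; have [B /andP[sB iB] <-] := rk_wit A.
exact: indep_le_rk (subset_trans sB sAA') iB.
Qed.

Lemma indep_rk (A : {set T}) : indep M A -> rk A = #|A|.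
Proof. by move=> iA; apply/eqP; rewrite eqn_leq rk_le_card indep_le_rk. Qed.

Lemma basis_ext (A B : {set T}) : B \subset A -> indep M B ->
  exists2 B' : {set T}, (B \subset B') && (B' \subset A) & indep M B' && (#|B'| == rk A).
Proof.
move=> sBA iB; move Hn: (rk A - #|B|) => n.
elim: n B sBA iB Hn => [|n IH] B sBA iB Hn.
  exists B; rewrite ?subxx ?sBA ?iB //=.
  by apply/eqP; have := indep_le_rk sBA iB; lia.
have [W /andP[sWA iW] cW] := rk_wit A.
have : #|B| < #|W| by lia.
case/(indep_aug iB iW) => x /setDP[xW xB] ixB.
have [|||B' /andP[s1 s2] H] := IH (x |: B).
- by rewrite subUset sub1set (subsetP sWA x xW) sBA.
- exact: ixB.
- by rewrite cardsU1 xB; lia.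
exists B' => //; rewrite s2 andbT.
exact: subset_trans (subsetUr [set x] B) s1.
Qed.

Definition cl (A : {set T}) : {set T} := [set x | rk (x |: A) <= rk A].

Lemma clE (A : {set T}) x : (x \in cl A) = (rk (x |: A) <= rk A).
Proof. by rewrite inE. Qed.

Lemma rk_add1 (A : {set T}) x : rk (x |: A) <= (rk A).+1.
Proof.
have [W /andP[sW iW] <-] := rk_wit (x |: A).
have iW' := indep_sub (subD1set W x) iW.
have : #|W :\ x| <= rk A.
  apply: indep_le_rk iW'; apply/subsetP => y /setD1P [yx yW].
  by have := subsetP sW y yW; rewrite in_setU1 (negbTE yx).
by rewrite (cardsD1 x W); case: (x \in W) => /=; lia.
Qed.

Lemma cl_notin (A B : {set T}) y : B \subset A -> indep M B -> #|B| = rk A ->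
  (y \notin cl A) = (y \notin B) && indep M (y |: B).
Proof.
move=> sBA iB eB; apply/idP/idP.
- rewrite clE -ltnNge => lt.
  have [W /andP[sW iW] cW] := rk_wit (y |: A).
  have : #|B| < #|W| by rewrite cW eB.
  case/(indep_aug iB iW) => z /setDP[zW zB] izB.
  case/setU1P: (subsetP sW z zW) => [zy|zA]; first by rewrite -zy zB izB.
  have sub : z |: B \subset A by rewrite subUset sub1set zA sBA.
  by have := indep_le_rk sub izB; rewrite cardsU1 zB eB => H; exfalso; lia.
- case/andP => yB iyB; rewrite clE -ltnNge.
  have := indep_le_rk (setUS [set y] sBA) iyB.
  by rewrite cardsU1 yB eB.
Qed.

Lemma subset_cl (A : {set T}) : A \subset cl A.
Proof. by apply/subsetP => x xA; rewrite clE (setU1_in xA). Qed.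

Lemma cl_mono (A A' : {set T}) : A \subset A' -> cl A \subset cl A'.
Proof.
move=> sAA'; apply/subsetP => y yA; apply/negPn/negP => nyA'.
have [B /andP[sB iB] cB] := rk_wit A.
have [B' /andP[s1 s2] /andP[iB' /eqP cB']] := basis_ext (subset_trans sB sAA') iB.
move: nyA'; rewrite (cl_notin y s2 iB' cB') => /andP[yB' iyB'].
have : y \notin cl A.
  rewrite (cl_notin y sB iB cB) (contra (subsetP s1 y) yB') /=.
  exact: indep_sub (setUS [set y] s1) iyB'.
by rewrite yA.
Qed.

Lemma rk_clU (A X : {set T}) : X \subset cl A -> rk (A :|: X) = rk A.
Proof.
move=> sX; apply/eqP; rewrite eqn_leq andbC rk_mono ?subsetUl //=.
have [B /andP[sB iB] cB] := rk_wit A.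
have [B' /andP[s1 s2] /andP[iB' /eqP cB']] :=
  basis_ext (subset_trans sB (subsetUl A X)) iB.
rewrite -cB' -cB leqNgt; apply/negP => lt.
have : ~~ (B' \subset B).
  by apply: contraTN lt => sB'B; rewrite -leqNgt subset_leq_card.
case/subsetPn => z zB' zB.
have zcl : z \in cl A.
  case/setUP: (subsetP s2 z zB') => [zA|zX]; last exact: subsetP sX z zX.
  exact: subsetP (subset_cl A) z zA.
move: zcl; apply/negP; rewrite (cl_notin z sB iB cB) zB /=.
by apply: indep_sub iB'; rewrite subUset sub1set zB' s1.
Qed.

Lemma cl_trans (A S : {set T}) : S \subset cl A -> cl S \subset cl A.
Proof.
move=> sS; apply/subsetP => y yS; rewrite clE.
have h1 : y \in cl (A :|: S) := subsetP (cl_mono (subsetUr A S)) y yS.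
rewrite clE (rk_clU sS) in h1.
by apply: leq_trans h1; apply: rk_mono; apply: setUS; exact: subsetUl.
Qed.

Lemma exchange (S : {set T}) x t : t \in cl (x |: S) -> t \notin cl S -> x \in cl (t |: S).
Proof.
rewrite !clE -ltnNge => h1 h2.
rewrite setUCA; apply: leq_trans h1 _.
exact: leq_trans (rk_add1 S x) h2.
Qed.

Lemma indep_notcl (A : {set T}) a : indep M A -> a \in A -> a \notin cl (A :\ a).
Proof.
move=> iA aA; rewrite clE setD1K // -ltnNge (indep_rk iA).
have iA' := indep_sub (subD1set A a) iA.
by rewrite (indep_rk iA') (cardsD1 a A) aA.
Qed.

Lemma indepU1 (A : {set T}) a : a \notin A -> indep M (a |: A) = indep M A && (a \notin cl A).
Proof.
move=> aA; apply/idP/andP.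
- move=> i; have iA := indep_sub (subsetUr [set a] A) i; split => //.
  by have := indep_notcl i (setU11 a A); rewrite setU1K.
- case=> iA; rewrite (cl_notin a (subxx A) iA (esym (indep_rk iA))) aA /=.
  done.
Qed.

End Basic.


Lemma F2cases (c : 'F_2) : c = 0%R \/ c = 1%R.
Proof. case: c => [[|[|m]] Hc]; [left|right|by []]; exact: val_inj. Qed.

Lemma F2_11 : (1 + 1 = 0 :> 'F_2)%R.
Proof. by apply: val_inj. Qed.

Lemma F2_01 : (0 == 1 :> 'F_2)%R = false.
Proof. by []. Qed.

Lemma oppF2 n (v : 'rV['F_2]_n) : (- v = v)%R.
Proof.
apply/rowP => i; rewrite mxE; case: (F2cases (v 0%R i)) => ->; first by rewrite oppr0.
by apply: val_inj.
Qed.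

Lemma addF2 n (v : 'rV['F_2]_n) : (v + v = 0)%R.
Proof. by rewrite -{2}(oppF2 v) subrr. Qed.

Lemma memv_F2 n (w : 'rV['F_2]_n) (U : {vspace 'rV['F_2]_n}) u :
  (u \in (<[w]> + U)%VS) = (u \in U) || (u + w \in U)%R.
Proof.
apply/memv_addP/orP.
- case=> x /vlineP[k ->] [y yU ->]; case: (F2cases k) => ->.
    by rewrite scale0r add0r; left.
  by rewrite scale1r; right; rewrite addrC addrA addF2 add0r.
- case=> h.
    by exists 0%R; [exact: mem0v | exists u; rewrite ?add0r].
  exists w; first exact: memv_line.
  by exists (u + w)%R; rewrite // addrC -addrA addF2 addr0.
Qed.

Section Simple.
Variables (T : finType) (M : matroid T).
Hypothesis sM : simple M.
Hypothesis nc : forall C : {set T}, ~ kclaw M 2 C.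
Local Notation rk := (mrank M).
Local Notation cl := (cl M).

Lemma indep1 x : indep M [set x].
Proof. by apply: sM; rewrite cards1. Qed.

Lemma indep2 x y : indep M [set x; y].
Proof. by apply: sM; rewrite cards2; case: (x != y). Qed.

Lemma rk0 : rk set0 = 0.
Proof. by apply/eqP; rewrite -leqn0 -(cards0 T) rk_le_card. Qed.

Lemma cl0 : cl set0 = set0.
Proof.
apply/setP => x; rewrite clE setU0 (indep_rk (indep1 x)) cards1 rk0 inE.
done.
Qed.

Lemma cl1 y : cl [set y] = [set y].
Proof.
apply/setP => x; rewrite clE in_set1; case: eqP => [->|/eqP xy].
  by rewrite setUid leqnn.
by rewrite (indep_rk (indep2 x y)) (indep_rk (indep1 y)) cards2 xy cards1.
Qed.

Lemma third_ex a b : a != b ->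
  exists c, (c \in cl [set a; b]) && (c \notin [set a; b]).
Proof.
move=> ab; case: (boolP [exists c, (c \in cl [set a; b]) && (c \notin [set a; b])]).
  by move/existsP.
move/existsPn => H; exfalso; apply: (nc (C := [set a; b])).
split; last by rewrite cards2 ab.
split; last exact: indep2.
move=> x xn; rewrite ltnNge.
by move: (H x); rewrite xn andbT clE.
Qed.

Definition third a b :=
  odflt a [pick c | (c \in cl [set a; b]) && (c \notin [set a; b])].

Lemma thirdP a b : a != b ->
  (third a b \in cl [set a; b]) && (third a b \notin [set a; b]).
Proof.
move=> ab; rewrite /third; case: pickP => [c //|H].
have [c Hc] := third_ex ab; by rewrite H in Hc.
Qed.

Lemma thirdC a b : third a b = third b a.
Proof.
case: (eqVneq a b) => [->//|ab].
rewrite /third (setUC [set a]); case: pickP => // H.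
have [c Hc] := third_ex ab; by rewrite setUC H in Hc.
Qed.

Lemma third_cl a b : a != b -> third a b \in cl [set a; b].
Proof. by case/thirdP/andP. Qed.

Lemma third_neq a b : a != b -> (third a b != a) && (third a b != b).
Proof. by case/thirdP/andP => _; rewrite !inE negb_or. Qed.

Lemma cl2_sub a b X : a \in cl X -> b \in cl X -> cl [set a; b] \subset cl X.
Proof. by move=> aX bX; apply: cl_trans; rewrite subUset !sub1set aX bX. Qed.

Section LA.
Variables (B : {set T}) (x : T).
Hypothesis xB : x \notin cl B.
Let F := cl B.

Lemma LA_sub : F :|: (x |: [set third x y | y in F]) \subset cl (x |: B).
Proof.
rewrite !subUset sub1set (cl_mono M (subsetUr [set x] B)) /=.
rewrite (subsetP (subset_cl M (x |: B))) ?setU11 //=.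
apply/subsetP => _ /imsetP[y yF ->].
have xy : x != y by apply: contraNneq xB => ->.
apply: (subsetP (cl2_sub _ _)) (third_cl xy).
  exact: (subsetP (subset_cl M _)) (setU11 _ _).
exact: (subsetP (cl_mono M (subsetUr [set x] B))).
Qed.

Lemma LA_notF y : y \in F -> third x y \notin F.
Proof.
move=> yF; have xy : x != y by apply: contraNneq xB => ->.
apply/negP => tF; case/andP: (third_neq xy) => _ ty.
have h := exchange (third_cl xy) (_ : third x y \notin cl [set y]).
apply: (negP xB); apply: (subsetP (cl2_sub tF yF)); apply: h.
by rewrite cl1 in_set1.
Qed.

Lemma LA_inj : {in F &, injective (third x)}.
Proof.
move=> y y' yF y'F e; apply/eqP; apply/negPn/negP => yy'.
have xy : x != y by apply: contraNneq xB => ->.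
have xy' : x != y' by apply: contraNneq xB => ->.
set c := third x y in e.
have c1 : c \in cl [set x; y] := third_cl xy.
have c2 : c \in cl [set y'; x] by rewrite setUC e; exact: third_cl xy'.
have cx : c \notin cl [set x] by rewrite cl1 in_set1; case/andP: (third_neq xy).
have h1 := exchange c2 cx.
have h2 : y' \in cl [set x; y].
  apply: (subsetP (cl2_sub c1 _)) h1.
  exact: (subsetP (subset_cl M _)) (setU11 _ _).
have h3 := exchange h2 (_ : y' \notin cl [set y]).
apply: (negP xB); apply: (subsetP (cl2_sub y'F yF)); apply: h3.
by rewrite cl1 in_set1 eq_sym.
Qed.

Lemma LA_card : #|F :|: (x |: [set third x y | y in F])| = (#|F|).*2.+1.
Proof.
rewrite card_disjU; last first.
  move=> z zF; rewrite in_setU1 negb_or; apply/andP; split.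
    by apply: contraNneq xB => <-.
  by apply/imsetP => -[y yF ez]; move: (LA_notF yF); rewrite -ez zF.
rewrite cardsU1 card_in_imset; last exact: LA_inj.
have -> : x \notin [set third x y | y in F].
  apply/imsetP => -[y yF e].
  have xy : x != y by apply: contraNneq xB => ->.
  by case/andP: (third_neq xy); rewrite -e eqxx.
rewrite -addnn; lia.
Qed.

Lemma LA : (#|cl B|).*2.+1 <= #|cl (x |: B)|.
Proof. by rewrite -LA_card; apply: subset_leq_card; exact: LA_sub. Qed.

End LA.

Lemma count_ext n (B B' : {set T}) : indep M B' -> B \subset B' ->
  #|B'| = #|B| + n -> 2 ^ n * (#|cl B|).+1 <= (#|cl B'|).+1.
Proof.
elim: n B' => [|n IH] B' iB' sBB' cB'.
  have /eqP <- : B == B' by rewrite eqEcard sBB' cB' addn0 leqnn.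
  by rewrite mul1n.
have : ~~ (B' \subset B) by apply/negP => /subset_leq_card; lia.
case/subsetPn => z zB' zB.
have iB'' := indep_sub (subD1set B' z) iB'.
have sBB'' : B \subset B' :\ z.
  apply/subsetP => y yB; rewrite in_setD1 (subsetP sBB' y yB) andbT.
  by apply: contraNneq zB => <-.
have cB'' : #|B' :\ z| = #|B| + n by move: cB'; rewrite (cardsD1 z B') zB'; lia.
have h1 := IH _ iB'' sBB'' cB''.
have h2 := LA (indep_notcl iB' zB').
rewrite setD1K // in h2.
rewrite expnS -mulnA; lia.
Qed.

Lemma lower (B : {set T}) : indep M B -> 2 ^ #|B| <= (#|cl B|).+1.
Proof.
move=> iB; have := @count_ext #|B| set0 B iB (sub0set B).
by rewrite cards0 cl0 cards0 muln1; apply.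
Qed.

Lemma part1 : 2 ^ rk setT - 1 <= #|T|.
Proof.
have [B /andP[_ iB] cB] := rk_wit M setT.
have := lower iB; rewrite cB.
have : #|cl B| <= #|T| by apply: max_card.
lia.
Qed.



Definition addo (u v : option T) : option T :=
  match u, v with
  | None, _ => v
  | _, None => u
  | Some a, Some b => if a == b then None else Some (third a b)
  end.

Lemma addoC u v : addo u v = addo v u.
Proof. by case: u v => [a|] [b|] //=; rewrite eq_sym (thirdC a b). Qed.

Lemma addo0 u : addo u None = u.
Proof. by case: u. Qed.

Lemma addoo u : addo u u = None.
Proof. by case: u => //= a; rewrite eqxx. Qed.

Lemma Some_addo x y : x != y -> addo (Some x) (Some y) = Some (third x y).
Proof. by move=> xy; rewrite /= (negbTE xy). Qed.

Definition osp (X : {set T}) (o : option T) :=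
  if o is Some y then y \in cl X else true.

Lemma osp_add X u v : osp X u -> osp X v -> osp X (addo u v).
Proof.
case: u v => [a|] [b|] //= aX bX; case: eqP => // /eqP ab /=.
exact: (subsetP (cl2_sub aX bX)) _ (third_cl ab).
Qed.

Lemma osp_mono (X Y : {set T}) o : X \subset Y -> osp X o -> osp Y o.
Proof. by case: o => //= y sXY; exact: (subsetP (cl_mono M sXY)). Qed.

Lemma osp_in (X : {set T}) y : y \in X -> osp X (Some y).
Proof. by move=> yX; exact: (subsetP (subset_cl M X)). Qed.

Section Eq.
Hypothesis eqT : #|T| = 2 ^ rk setT - 1.

Lemma E1 (B : {set T}) : indep M B -> #|cl B| = 2 ^ #|B| - 1.
Proof.
move=> iB; have lo := lower iB.
have [B' /andP[s1 _] /andP[iB' /eqP cB']] := basis_ext (subsetT B) iB.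
have hc := subset_leq_card s1.
set n := #|B'| - #|B|.
have e : 2 ^ #|B'| = 2 ^ #|B| * 2 ^ n by rewrite -expnD subnKC.
have h := @count_ext n B B' iB' s1 (esym (subnKC hc)).
have hT : #|cl B'| <= #|T| := max_card _.
have h2 : (#|cl B'|).+1 <= 2 ^ #|B'|.
  by move: eqT; rewrite -cB'; have := expn_gt0 2 #|B'|; lia.
have h3 : (#|cl B|).+1 <= 2 ^ #|B|.
  rewrite -(leq_pmul2r (expn_gt0 2 n)) -e mulnC.
  exact: leq_trans h h2.
lia.
Qed.

Lemma E2 (B : {set T}) x : indep M B -> x \notin cl B ->
  cl (x |: B) = cl B :|: (x |: [set third x y | y in cl B]).
Proof.
move=> iB xB; apply/eqP; rewrite eq_sym eqEcard LA_sub //= LA_card //.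
have xB' : x \notin B := contra (subsetP (subset_cl M B) x) xB.
have ixB : indep M (x |: B) by rewrite indepU1 // iB xB.
rewrite (E1 ixB) (E1 iB) cardsU1 xB' add1n expnS.
have := expn_gt0 2 #|B|; lia.
Qed.

Lemma line a b y : a != b -> y \in cl [set a; b] ->
  [|| y == a, y == b | y == third a b].
Proof.
move=> ab; have ba : b \notin cl [set a] by rewrite cl1 in_set1 eq_sym.
rewrite (setUC [set a]) (E2 (indep1 a) ba) cl1 imset_set1 (thirdC b a) !inE.
done.
Qed.

Lemma uniq3 a b y : a != b -> y \in cl [set a; b] -> y != a -> y != b ->
  y = third a b.
Proof.
by move=> ab /(line ab) /or3P [/eqP->|/eqP->|/eqP->]; rewrite ?eqxx.
Qed.


Lemma addoK u v : addo u (addo u v) = v.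
Proof.
case: u v => [a|] [b|] //=; rewrite ?eqxx //.
case: (eqVneq a b) => [<-|ab]; first by [].
have [t1 t2] := andP (third_neq ab).
rewrite /= eq_sym (negbTE t1); congr Some; symmetry.
apply: uniq3; rewrite 1?eq_sym //.
have h1 : third a b \in cl (b |: [set a]) by rewrite setUC; exact: third_cl ab.
have h2 : third a b \notin cl [set a] by rewrite cl1 in_set1.
by have := exchange h1 h2; rewrite (setUC [set third a b]).
Qed.

Lemma addoKr u v : addo (addo u v) v = u.
Proof. by rewrite addoC (addoC u) addoK. Qed.

Lemma addo_inj u v w : addo u v = addo u w -> v = w.
Proof. by move=> e; rewrite -(addoK u v) e addoK. Qed.

Lemma addoA u v w : addo u (addo v w) = addo (addo u v) w.
Proof.
case: u => [a|]; last by [].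
case: v => [b|]; last by [].
case: w => [c|]; last by rewrite !addo0.
case: (eqVneq a b) => [<-|ab]; first by rewrite addoK addoo.
case: (eqVneq b c) => [<-|bc]; first by rewrite addoo addo0 addoKr.
case: (eqVneq a c) => [<-|ac].
  by rewrite (addoC (Some b)) addoK addoC addoK.
have eab := Some_addo ab; have ebc := Some_addo bc.
case: (boolP (c \in cl [set a; b])) => [cF|cF].
  have ec : c = third a b by apply: uniq3; rewrite // eq_sym.
  rewrite -ec in eab; rewrite eab addoo -eab.
  by rewrite (addoC (Some a) (Some b)) addoK addoo.
rewrite ebc eab.
set w := third b c; set u := third a b.
have G := E2 (indep2 a b) cF.
set G' := c |: [set a; b].
have ow : osp G' (Some w).
  by rewrite -ebc; apply: osp_add; apply: osp_in; rewrite !inE eqxx ?orbT.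
have oa : osp G' (Some a) by apply: osp_in; rewrite !inE eqxx ?orbT.
have ecw : Some c = addo (Some b) (Some w) by rewrite -ebc addoK.
have hP := osp_add oa ow.
have obF : osp [set a; b] (Some b) by apply: osp_in; rewrite !inE eqxx ?orbT.
have oaF : osp [set a; b] (Some a) by apply: osp_in; rewrite !inE eqxx ?orbT.
case eP : (addo (Some a) (Some w)) hP => [p|] /= hp; last first.
  have ewa : Some w = Some a by apply: (@addo_inj (Some a)); rewrite eP addoo.
  exfalso; move/negP: cF; apply.
  have : osp [set a; b] (Some c) by rewrite ecw ewa; apply: osp_add.
  done.
have ewp : Some w = addo (Some a) (Some p) by rewrite -eP addoK.
rewrite G in hp; case/setUP: hp => [pF|].
  exfalso; move/negP: cF; apply.
  have : osp [set a; b] (Some c) by rewrite ecw ewp; apply: osp_add => //; apply: osp_add.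
  done.
rewrite in_setU1 => /orP[/eqP pc|/imsetP[y yF ep]].
  have : Some a = Some b.
    apply: (@addo_inj (Some w)); rewrite addoC eP pc ecw addoC //.
  by case=> eab'; move: ab; rewrite eab' eqxx.
have cy : c != y by apply: contraNneq cF => ->.
have esp : Some p = addo (Some c) (Some y) by rewrite ep Some_addo.
case/or3P: (line ab yF) => /eqP ey.
- have : Some w = Some c by apply: (@addo_inj (Some a)); rewrite eP esp ey addoC.
  by case=> ewc; case/andP: (third_neq bc); rewrite -/w ewc eqxx.
- have : Some w = addo (Some a) (Some w) by rewrite eP esp ey addoC ebc.
  move=> e; have : Some a = None.
    by apply: (@addo_inj (Some w)); rewrite addo0 addoC -e.
  done.
- by rewrite esp ey addoC.
Qed.

Lemma ospU1 (X : {set T}) a o :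
  osp (a |: X) o = osp X o || osp X (addo (Some a) o).
Proof.
apply/idP/idP; last first.
  case/orP => h; first exact: osp_mono (subsetUr _ _) h.
  rewrite -(addoK (Some a) o); apply: osp_add; first by apply: osp_in; rewrite setU11.
  exact: osp_mono (subsetUr _ _) h.
case: o => [y|] // hy.
change (is_true (y \in cl (a |: X))) in hy.
change (is_true ((y \in cl X) || osp X (addo (Some a) (Some y)))).
case: (boolP (a \in cl X)) => aX.
  apply/orP; left; apply: (subsetP (cl_trans _)) hy.
  by rewrite subUset sub1set aX subset_cl.
have [B /andP[sB iB] cB] := rk_wit M X.
have XB : X \subset cl B.
  apply/subsetP => x xX; rewrite clE (indep_rk iB) cB.
  by apply: rk_mono; rewrite subUset sub1set xX sB.
have clXB : cl X = cl B.
  by apply/eqP; rewrite eqEsubset (cl_trans XB) (cl_mono M sB).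
have aB : a \notin cl B by rewrite -clXB.
have claXB : cl (a |: X) = cl (a |: B).
  apply/eqP; rewrite eqEsubset (cl_mono M (setUS _ sB)) andbT.
  apply: cl_trans; rewrite subUset sub1set (subsetP (subset_cl M _) a (setU11 _ _)).
  exact: subset_trans XB (cl_mono M (subsetUr _ _)).
rewrite claXB (E2 iB aB) in hy; rewrite clXB.
case/setUP: hy => [->//|]; rewrite in_setU1 => /orP[/eqP->|/imsetP[z zB ->]].
  by rewrite addoo orbT.
have az : a != z by apply: contraNneq aB => ->.
by rewrite -(Some_addo az) addoK /= clXB zB orbT.
Qed.

Lemma addo_swap x y z w : addo (addo x y) (addo z w) = addo (addo x z) (addo y w).
Proof. by rewrite -!addoA (addoA y) (addoC y z) -addoA. Qed.

Section Final.
Variable B0 : {set T}.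
Hypothesis iB0 : indep M B0.
Hypothesis cB0 : #|B0| = rk setT.

Definition bv (i : 'I_#|B0|) : T := enum_val i.

Definition hF (c : 'F_2) i := if c == 1%R then Some (bv i) else None.

Definition gsum (v : 'rV['F_2]_#|B0|) (s : seq 'I_#|B0|) :=
  foldr (fun i acc => addo (hF (v 0%R i) i) acc) None s.

Definition g v := gsum v (enum 'I_#|B0|).

Lemma hF_add c d i : hF (c + d)%R i = addo (hF c i) (hF d i).
Proof.
rewrite /hF; case: (F2cases c) => ->; case: (F2cases d) => ->;
  rewrite ?addr0 ?add0r ?F2_11 ?F2_01 ?eqxx //=.
by rewrite eqxx.
Qed.

Lemma gsum_add u v s : gsum (u + v)%R s = addo (gsum u s) (gsum v s).
Proof. by elim: s => //= i s ->; rewrite mxE hF_add addo_swap. Qed.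

Lemma g_add u v : g (u + v)%R = addo (g u) (g v).
Proof. exact: gsum_add. Qed.

Lemma g0 : g 0%R = None.
Proof. by rewrite /g; elim: (enum _) => //= i s ->; rewrite mxE /hF F2_01. Qed.

Lemma gsum_osp v s : osp [set bv i | i in s] (gsum v s).
Proof.
elim: s => //= i s IH; apply: osp_add.
  rewrite /hF; case: ifP => // _; apply: osp_in.
  by apply: imset_f; rewrite inE eqxx.
apply: osp_mono IH; apply/subsetP => _ /imsetP[j js ->].
by apply: imset_f; rewrite inE js orbT.
Qed.

Lemma gsum_None v s : uniq s -> gsum v s = None -> forall i, i \in s -> v 0%R i = 0%R.
Proof.
elim: s => //= i s IH /andP[iS us] e.
have hi : v 0%R i = 0%R.
  case: (F2cases (v 0%R i)) => // h1; exfalso.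
  rewrite /hF h1 eqxx in e.
  have eg : gsum v s = Some (bv i).
    by rewrite -(addoK (Some (bv i)) (gsum v s)) e addo0.
  have := gsum_osp v s; rewrite eg /=; apply/negP.
  have := indep_notcl iB0 (enum_valP i); apply: contra.
  apply: (subsetP (cl_mono M _)); apply/subsetP => _ /imsetP[j js ->].
  rewrite in_setD1 enum_valP andbT; apply/negP => /eqP /enum_val_inj ji.
  by move: iS; rewrite -ji js.
rewrite /hF hi F2_01 /= in e.
move=> j; rewrite inE => /orP[/eqP->//|]; exact: IH us e j.
Qed.

Lemma g_None v : g v = None -> v = 0%R.
Proof.
move=> e; apply/rowP => i; rewrite mxE.
exact: gsum_None (enum_uniq _) e i (mem_enum _ i).
Qed.

Lemma g_inj : injective g.
Proof.
move=> u v e; have h : (u + v = 0)%R.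
  by apply: g_None; rewrite g_add e addoo.
by rewrite -(addrK v u) h sub0r oppF2.
Qed.

Lemma g_surj y : exists v, g v = y.
Proof.
have hc : #|{: option T}| <= #|{: 'rV['F_2]_#|B0|}|.
  rewrite card_mx card_Fp // mul1n card_option eqT -cB0.
  by have := expn_gt0 2 #|B0|; lia.
by case/codomP: (inj_card_onto g_inj hc y) => v ->; exists v.
Qed.

Definition fPG x : 'rV['F_2]_#|B0| := odflt 0%R [pick v | g v == Some x].

Lemma gf x : g (fPG x) = Some x.
Proof.
rewrite /fPG; case: pickP => [v /eqP //|H].
by have [v e] := g_surj (Some x); move: (H v); rewrite e eqxx.
Qed.

Lemma span_osp (s : seq T) u :
  (u \in <<map fPG s>>%VS) = osp [set x in s] (g u).
Proof.
elim: s u => [|a s IH] u /=.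
  rewrite span_nil memv0 set_nil.
  case e: (g u) => [y|] /=; first by rewrite cl0 inE; apply/eqP => u0; rewrite u0 g0 in e.
  by rewrite (g_None e) eqxx.
rewrite span_cons memv_F2 set_cons ospU1 !IH g_add gf addoC.
done.
Qed.

Lemma indep_free (s : seq T) : uniq s -> indep M [set x in s] = free (map fPG s).
Proof.
elim: s => [|a s IH] /=; first by rewrite set_nil indep0 nil_free.
case/andP => aS us.
rewrite set_cons indepU1; last by rewrite inE.
by rewrite free_cons IH // span_osp gf /= andbC.
Qed.

Lemma isoPG : iso_PG M #|B0|.
Proof.
exists fPG; split.
- by move=> x y e; have := gf x; rewrite e gf; case.
- by move=> x; apply/eqP => e; have := gf x; rewrite e g0.
- move=> v nv; case e: (g v) => [x|].
    by exists x; apply: g_inj; rewrite gf e.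
  by move: nv; rewrite (g_None e) eqxx.
- by move=> A; rewrite -{1}(set_enum A); apply: indep_free; exact: enum_uniq.
Qed.

End Final.

End Eq.

End Simple.

Theorem lemma3p1 (T : finType) (M : matroid T) (r : nat) :
  mrankM M = r -> simple M -> (forall C : {set T}, ~ kclaw M 2 C) ->
  2 ^ r - 1 <= #|T| /\ (#|T| = 2 ^ r - 1 -> iso_PG M r).
Proof.
move=> rkM sM nc; rewrite /mrankM in rkM; subst r; split.
  exact: (part1 sM nc).
move=> eqT.
have [B0 /andP[_ iB0] cB0] := rk_wit M setT.
rewrite -cB0; exact: (isoPG sM nc eqT iB0 cB0).
Qed.
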